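(* In a strongly causal OPT, let $\rho\in\mathsf{St}_1(\mathrm{A})$ and $\mathcal C\in\mathsf{Tr}_1(\mathrm{A}\to\mathrm{A})$. (i) If every state of the theory has a purification, then $F(\rho,\mathcal C)=\inf_{\Phi\in P_\rho}F[\Phi,(\mathcal C\boxtimes\mathcal I)(\Phi)]^2$. (ii) If moreover the theory satisfies essential uniqueness of purification and atomicity of parallel composition of states, then $F(\rho,\mathcal C)=F[\Phi,(\mathcal C\boxtimes\mathcal I)(\Phi)]^2$ for every $\Phi\in P_\rho$.
   Context: Framework (operational probabilistic theory, OPT): each system $\mathrm{A}$ has states $\mathsf{St}(\mathrm{A})$ (normalized ones $\mathsf{St}_1(\mathrm{A})$), effects $\mathsf{Eff}(\mathrm{A})$, transformations $\mathsf{Tr}(\mathrm{A}\to\mathrm{B})$ (channels $\mathsf{Tr}_1$), sequential ($\circ$) and parallel ($\boxtimes$) composition, pairing $(a|\rho)$. Strong causality: for every test $\{\mathcal A_i\}$ and tests $\{\mathcal B^i_j\}_j$, $\{\mathcal B^i_j\circ\mathcal A_i\}$ is a test; unique deterministic effect $e_{\mathrm{A}}$. A state is pure if its only refinements (collections of states in a preparation test summing to it) are of the form $\lambda_i\rho$. A dilation of $\rho\in\mathsf{St}(\mathrm{A})$ is $\Psi\in\mathsf{St}(\mathrm{A}\mathrm{C})$ with $(\mathcal I_{\mathrm{A}}\boxtimes e_{\mathrm{C}})\Psi=\rho$; $D_\rho$ the set of dilations; a purification is a pure dilation; $P_\rho$ the set of purifications. Essential uniqueness of purification: for every $\rho$ with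 $P_\rho\ne\emptyset$ and all $\Phi,\Psi\in P_\rho\cap\mathsf{St}(\mathrm{A}\mathrm{B})$ there is a reversible $\mathcal U\in\mathsf{Tr}_1(\mathrm{B}\to\mathrm{B})$ with $\Psi=(\mathcal I_{\mathrm{A}}\boxtimes\mathcal U)\Phi$. Atomicity of parallel composition of states: $\phi\boxtimes\psi$ is pure whenever $\phi,\psi$ are pure. Fidelity: for $\rho,\sigma\in\mathsf{St}_1(\mathrm{A})$, $F(\rho,\sigma):=\inf_{\{a_i\}}\sum_i\sqrt{(a_i|\rho)(a_i|\sigma)}$, infimum over observation tests $\{a_i\}$ of $\mathrm{A}$. Correlation fidelity: $F(\rho,\mathcal C):=\inf_{\Psi\in D_\rho}F[\Psi,(\mathcal C\boxtimes\mathcal I)(\Psi)]^2$. *)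

(* Defs.v *)
From HB Require Import structures.
From mathcomp Require Import all_boot all_order all_algebra.
From mathcomp Require Import classical_sets reals.
From Stdlib Require List Permutation.

Set Implicit Arguments.
Unset Strict Implicit.
Unset Printing Implicit Defensive.
Import Order.TTheory GRing.Theory Num.Theory.
Local Open Scope ring_scope.
Local Open Scope classical_set_scope.

(* Transformations Tr A B are the elements of the real linear span of  *)
(* the events (sums = coarse-grainings, real multiples); the actual     *)
(* events are those occurring in some test (predicate [Ev]).            *)
(* States of A = Tr I A, effects of A = Tr A I, scalars = Tr I I.       *)

Record OPTops (R : realType) := {
  Sys : Type;
  sI : Sys;                                   (* trivial system *)
  sP : Sys -> Sys -> Sys;
  Tr : Sys -> Sys -> Type;
  comp : forall A B C, Tr B C -> Tr A B -> Tr A C;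
  idT : forall A, Tr A A;
  par : forall A B C D, Tr A B -> Tr C D -> Tr (sP A C) (sP B D);
  addT : forall A B, Tr A B -> Tr A B -> Tr A B;
  zeroT : forall A B, Tr A B;
  sclT : forall A B, R -> Tr A B -> Tr A B;
  Test : forall A B, list (Tr A B) -> Prop;
  prob : Tr sI sI -> R;
  lu : forall A, Tr (sP sI A) A;
  luI : forall A, Tr A (sP sI A);
  ru : forall A, Tr (sP A sI) A;
  ruI : forall A, Tr A (sP A sI);
  asc : forall A B C, Tr (sP (sP A B) C) (sP A (sP B C));
  ascI : forall A B C, Tr (sP A (sP B C)) (sP (sP A B) C);
  sw : forall A B, Tr (sP A B) (sP B A)
}.

Arguments sI {R T} : rename.
Arguments sP {R T} _ _ : rename.
Arguments Tr {R T} _ _ : rename.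
Arguments comp {R T A B C} _ _ : rename.
Arguments idT {R T} A : rename.
Arguments par {R T A B C D} _ _ : rename.
Arguments addT {R T A B} _ _ : rename.
Arguments zeroT {R T A B} : rename.
Arguments sclT {R T A B} _ _ : rename.
Arguments Test {R T A B} _ : rename.
Arguments prob {R T} _ : rename.
Arguments lu {R T} A : rename.
Arguments luI {R T} A : rename.
Arguments ru {R T} A : rename.
Arguments ruI {R T} A : rename.
Arguments asc {R T} A B C : rename.
Arguments ascI {R T} A B C : rename.
Arguments sw {R T} A B : rename.

Section Basic.
Variables (R : realType) (T : OPTops R).

Definition Ev (A B : Sys T) (f : Tr A B) : Prop :=
  exists l : list (Tr A B), Test l /\ List.In f l.

Definition IsState (A : Sys T) (rho : Tr sI A) : Prop := Ev rho.
Definition IsChannel (A B : Sys T) (f : Tr A B) : Prop := Test [:: f].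
Definition NormState (A : Sys T) (rho : @Tr R T sI A) : Prop := Test [:: rho].

Definition pairing (A : Sys T) (a : Tr A sI) (rho : Tr sI A) : R := prob (comp a rho).

Definition sumT (A B : Sys T) (s : list (Tr A B)) : Tr A B :=
  foldr (@addT R T A B) zeroT s.

Definition Reversible (A B : Sys T) (U : Tr A B) : Prop :=
  IsChannel U /\ exists V : Tr B A, IsChannel V /\
    comp V U = idT A /\ comp U V = idT B.

Definition Pure (A : Sys T) (rho : Tr sI A) : Prop :=
  Ev rho /\
  forall (l : list (Tr sI A)) (m : bitseq),
    Test l -> sumT (mask m l) = rho ->
    forall sigma, List.In sigma (mask m l) -> exists lam : R, sigma = sclT lam rho.

(* parallel composition of states (I identified with II) *)
Definition stPar (A B : Sys T) (phi : Tr sI A) (psi : Tr sI B) : Tr sI (sP A B) :=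
  comp (par phi psi) (luI sI).

Definition Dilation (A C : Sys T) (rho : Tr sI A) (Psi : Tr sI (sP A C)) : Prop :=
  IsState Psi /\
  exists e : Tr C sI, Test [:: e] /\ comp (ru A) (comp (par (idT A) e) Psi) = rho.

Definition Purification (A C : Sys T) (rho : Tr sI A) (Psi : Tr sI (sP A C)) : Prop :=
  Dilation rho Psi /\ Pure Psi.

Definition fidelity (A : Sys T) (rho sigma : Tr sI A) : R :=
  inf [set x : R | exists l : list (Tr A sI), Test l /\
        x = \sum_(a <- l) Num.sqrt (pairing a rho * pairing a sigma)].

Definition applyA (A C : Sys T) (Ch : Tr A A) (Psi : Tr sI (sP A C)) : Tr sI (sP A C) :=
  comp (par Ch (idT C)) Psi.

Definition corrFid (A : Sys T) (rho : Tr sI A) (Ch : Tr A A) : R :=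
  inf [set x : R | exists (C : Sys T) (Psi : Tr sI (sP A C)),
        Dilation rho Psi /\ x = (fidelity Psi (applyA Ch Psi)) ^+ 2].

Definition corrFidPur (A : Sys T) (rho : Tr sI A) (Ch : Tr A A) : R :=
  inf [set x : R | exists (C : Sys T) (Phi : Tr sI (sP A C)),
        Purification rho Phi /\ x = (fidelity Phi (applyA Ch Phi)) ^+ 2].

Record OPTlaws : Prop := {
  compA : forall (A B C D : Sys T) (f : Tr A B) (g : Tr B C) (h : Tr C D),
      comp h (comp g f) = comp (comp h g) f;
  comp1T : forall (A B : Sys T) (f : Tr A B), comp (idT B) f = f;
  compT1 : forall (A B : Sys T) (f : Tr A B), comp f (idT A) = f;
  par_comp : forall (A B C D E F : Sys T) (f1 : Tr A B) (g1 : Tr B C)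
      (f2 : Tr D E) (g2 : Tr E F),
      par (comp g1 f1) (comp g2 f2) = comp (par g1 g2) (par f1 f2);
  par_id : forall A B : Sys T, par (idT A) (idT B) = idT (sP A B);
  lu_inv1 : forall A : Sys T, comp (lu A) (luI A) = idT A;
  lu_inv2 : forall A : Sys T, comp (luI A) (lu A) = idT (sP sI A);
  ru_inv1 : forall A : Sys T, comp (ru A) (ruI A) = idT A;
  ru_inv2 : forall A : Sys T, comp (ruI A) (ru A) = idT (sP A sI);
  asc_inv1 : forall A B C : Sys T, comp (asc A B C) (ascI A B C) = idT (sP A (sP B C));
  asc_inv2 : forall A B C : Sys T, comp (ascI A B C) (asc A B C) = idT (sP (sP A B) C);
  sw_inv : forall A B : Sys T, comp (sw B A) (sw A B) = idT (sP A B);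
  lu_nat : forall (A B : Sys T) (f : Tr A B),
      comp (lu B) (par (idT sI) f) = comp f (lu A);
  ru_nat : forall (A B : Sys T) (f : Tr A B),
      comp (ru B) (par f (idT sI)) = comp f (ru A);
  asc_nat : forall (A A' B B' C C' : Sys T) (f : Tr A A') (g : Tr B B') (h : Tr C C'),
      comp (asc A' B' C') (par (par f g) h) = comp (par f (par g h)) (asc A B C);
  sw_nat : forall (A B C D : Sys T) (f : Tr A B) (g : Tr C D),
      comp (sw B D) (par f g) = comp (par g f) (sw A C);
  triangle : forall A B : Sys T,
      comp (par (idT A) (lu B)) (asc A sI B) = par (ru A) (idT B);
  pentagon : forall A B C D : Sys T,
      comp (asc A B (sP C D)) (asc (sP A B) C D) =
      comp (par (idT A) (asc B C D)) (comp (asc A (sP B C) D) (par (asc A B C) (idT D)));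
  hexagon : forall A B C : Sys T,
      comp (asc B C A) (comp (sw A (sP B C)) (asc A B C)) =
      comp (par (idT B) (sw A C)) (comp (asc B A C) (par (sw A B) (idT C)));
  addTC : forall (A B : Sys T) (f g : Tr A B), addT f g = addT g f;
  addTA : forall (A B : Sys T) (f g h : Tr A B), addT f (addT g h) = addT (addT f g) h;
  add0T : forall (A B : Sys T) (f : Tr A B), addT zeroT f = f;
  scl1T : forall (A B : Sys T) (f : Tr A B), sclT 1 f = f;
  sclTA : forall (A B : Sys T) (a b : R) (f : Tr A B), sclT a (sclT b f) = sclT (a * b) f;
  sclTDl : forall (A B : Sys T) (a b : R) (f : Tr A B),
      sclT (a + b) f = addT (sclT a f) (sclT b f);
  sclTDr : forall (A B : Sys T) (a : R) (f g : Tr A B),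
      sclT a (addT f g) = addT (sclT a f) (sclT a g);
  compDl : forall (A B C : Sys T) (f : Tr A B) (g h : Tr B C),
      comp (addT g h) f = addT (comp g f) (comp h f);
  compDr : forall (A B C : Sys T) (f h : Tr A B) (g : Tr B C),
      comp g (addT f h) = addT (comp g f) (comp g h);
  comp0l : forall (A B C : Sys T) (f : Tr A B), comp (zeroT : Tr B C) f = zeroT;
  comp0r : forall (A B C : Sys T) (g : Tr B C), comp g (zeroT : Tr A B) = zeroT;
  compZl : forall (A B C : Sys T) (a : R) (f : Tr A B) (g : Tr B C),
      comp (sclT a g) f = sclT a (comp g f);
  compZr : forall (A B C : Sys T) (a : R) (f : Tr A B) (g : Tr B C),
      comp g (sclT a f) = sclT a (comp g f);
  parDl : forall (A B C D : Sys T) (f g : Tr A B) (h : Tr C D),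
      par (addT f g) h = addT (par f h) (par g h);
  parDr : forall (A B C D : Sys T) (f : Tr A B) (g h : Tr C D),
      par f (addT g h) = addT (par f g) (par f h);
  par0l : forall (A B C D : Sys T) (h : Tr C D), par (zeroT : Tr A B) h = zeroT;
  par0r : forall (A B C D : Sys T) (f : Tr A B), par f (zeroT : Tr C D) = zeroT;
  parZl : forall (A B C D : Sys T) (a : R) (f : Tr A B) (h : Tr C D),
      par (sclT a f) h = sclT a (par f h);
  parZr : forall (A B C D : Sys T) (a : R) (f : Tr A B) (h : Tr C D),
      par f (sclT a h) = sclT a (par f h);
  prob_add : forall s t : Tr (@sI R T) (@sI R T), prob (addT s t) = prob s + prob t;
  prob_scl : forall (a : R) (s : Tr (@sI R T) (@sI R T)), prob (sclT a s) = a * prob s;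
  prob_comp : forall s t : Tr (@sI R T) (@sI R T), prob (comp s t) = prob s * prob t;
  prob_inj : forall s t : Tr (@sI R T) (@sI R T), prob s = prob t -> s = t;
  prob_ge0 : forall s : Tr (@sI R T) (@sI R T), Ev s -> 0 <= prob s;
  prob_test : forall l : list (Tr (@sI R T) (@sI R T)), Test l -> \sum_(s <- l) prob s = 1;
  test_id : forall A : Sys T, Test [:: idT A];
  test_lu : forall A : Sys T, Test [:: lu A];
  test_luI : forall A : Sys T, Test [:: luI A];
  test_ru : forall A : Sys T, Test [:: ru A];
  test_ruI : forall A : Sys T, Test [:: ruI A];
  test_asc : forall A B C : Sys T, Test [:: asc A B C];
  test_ascI : forall A B C : Sys T, Test [:: ascI A B C];
  test_sw : forall A B : Sys T, Test [:: sw A B];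
  test_seq : forall (A B C : Sys T) (l : list (Tr A B)) (m : list (Tr B C)),
      Test l -> Test m -> Test [seq comp g f | f <- l, g <- m];
  test_par : forall (A B C D : Sys T) (l : list (Tr A B)) (m : list (Tr C D)),
      Test l -> Test m -> Test [seq par f g | f <- l, g <- m];
  test_perm : forall (A B : Sys T) (l l' : list (Tr A B)),
      Test l -> Permutation.Permutation l l' -> Test l';
  test_cg : forall (A B : Sys T) (a b : Tr A B) (l : list (Tr A B)),
      Test (a :: b :: l) -> Test (addT a b :: l);
  tr_ext : forall (A B : Sys T) (f g : Tr A B),
      (forall (E : Sys T) (Psi : Tr sI (sP A E)) (c : Tr (sP B E) sI),
          Ev Psi -> Ev c ->
          prob (comp c (comp (par f (idT E)) Psi)) =
          prob (comp c (comp (par g (idT E)) Psi))) -> f = g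
}.

(* strong causality: conditional tests + unique deterministic effect *)
Definition StrongCausal : Prop :=
  (forall (A B C : Sys T) (l : list (Tr A B)) (m : list (list (Tr B C))),
      Test l -> size m = size l ->
      (forall i, (i < size m)%N -> Test (nth [::] m i)) ->
      Test (flatten [seq [seq comp b p.1 | b <- p.2] | p <- zip l m])) /\
  (forall A : Sys T, exists e : Tr A sI, Test [:: e] /\
      forall e' : Tr A sI, Test [:: e'] -> e' = e).

Definition AllPurifiable : Prop :=
  forall (A : Sys T) (rho : Tr sI A), IsState rho ->
    exists (C : Sys T) (Phi : Tr sI (sP A C)), Purification rho Phi.

Definition EssUniqPurif : Prop :=
  forall (A : Sys T) (rho : Tr sI A),
    (exists (C : Sys T) (Phi : Tr sI (sP A C)), Purification rho Phi) ->
    forall (B : Sys T) (Phi Psi : Tr sI (sP A B)),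
      Purification rho Phi -> Purification rho Psi ->
      exists U : Tr B B, Reversible U /\ Psi = comp (par (idT A) U) Phi.

Definition AtomicParStates : Prop :=
  forall (A B : Sys T) (phi : Tr sI A) (psi : Tr sI B),
    Pure phi -> Pure psi -> Pure (stPar phi psi).

End Basic.

Arguments OPTlaws {R} T.
Arguments StrongCausal {R} T.
Arguments AllPurifiable {R} T.
Arguments EssUniqPurif {R} T.
Arguments AtomicParStates {R} T.

(* Main.v *)
Require Import Defs.
From mathcomp Require Import all_boot all_order all_algebra.
From mathcomp Require Import classical_sets reals.
From mathcomp Require Import ring lra.
From Stdlib Require List Permutation.
Import Defs.
Set Implicit Arguments. Unset Strict Implicit. Unset Printing Implicit Defensive.
Import Order.TTheory GRing.Theory Num.Theory.
Local Open Scope ring_scope.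
Local Open Scope classical_set_scope.

Section S.
Variables (R : realType) (T : OPTops R).
Variable HT : OPTlaws T.
Variable HSC : StrongCausal T.

Notation Tr := (@Tr R T).
Notation Sys := (Sys T).
Notation I := (@sI R T).

Lemma tseq (X Y Z : Sys) (f : Tr X Y) (g : Tr Y Z) :
  Test [:: f] -> Test [:: g] -> Test [:: comp g f].
Proof. by move=> hf hg; have := test_seq HT hf hg. Qed.

Lemma tpar (X Y Z W : Sys) (f : Tr X Y) (g : Tr Z W) :
  Test [:: f] -> Test [:: g] -> Test [:: par f g].
Proof. by move=> hf hg; have := test_par HT hf hg. Qed.

Lemma detU (X : Sys) (e1 e2 : Tr X I) : Test [:: e1] -> Test [:: e2] -> e1 = e2.
Proof.
move=> h1 h2; have [e [_ He]] := HSC.2 X.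
by rewrite (He _ h1) (He _ h2).
Qed.

Lemma parE1 (X Y Z W : Sys) (f : Tr X Y) (g : Tr Z W) :
  par f g = comp (par f (idT _)) (par (idT _) g).
Proof. by rewrite -(par_comp HT) (comp1T HT) (compT1 HT). Qed.

Lemma parE2 (X Y Z W : Sys) (f : Tr X Y) (g : Tr Z W) :
  par f g = comp (par (idT _) g) (par f (idT _)).
Proof. by rewrite -(par_comp HT) (comp1T HT) (compT1 HT). Qed.

Lemma prob0 : prob (zeroT : Tr I I) = 0.
Proof.
have := prob_add HT zeroT zeroT; rewrite (add0T HT) => h.
lra.
Qed.

Lemma prob1 : prob (idT I) = 1.
Proof. by have := prob_test HT (test_id HT I); rewrite big_cons big_nil addr0. Qed.

Lemma ruI_nat (X Y : Sys) (f : Tr X Y) :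
  comp (ruI Y) f = comp (par f (idT I)) (ruI X).
Proof.
rewrite -{1}(compT1 HT f) -(ru_inv1 HT X) (compA HT (ruI X) (ru X) f) -(ru_nat HT).
by rewrite -(compA HT) (compA HT _ (ru Y) (ruI Y)) (ru_inv2 HT) (comp1T HT).
Qed.

Lemma ascI_nat (X X' Y Y' Z Z' : Sys) (f : Tr X X') (g : Tr Y Y') (h : Tr Z Z') :
  comp (ascI X' Y' Z') (par f (par g h)) = comp (par (par f g) h) (ascI X Y Z).
Proof.
rewrite -{1}(compT1 HT (par f (par g h))) -(asc_inv1 HT) (compA HT (ascI _ _ _) (asc _ _ _) (par f (par g h))) -(asc_nat HT).
by rewrite -(compA HT) (compA HT _ (asc _ _ _) (ascI _ _ _)) (asc_inv2 HT) (comp1T HT).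
Qed.

Lemma luru : lu I = ru I.
Proof. exact: detU (test_lu HT I) (test_ru HT I). Qed.

Lemma luruI : luI I = ruI I.
Proof.
rewrite -[luI I](comp1T HT) -(ru_inv2 HT) -(compA HT) -luru (lu_inv1 HT) (compT1 HT) //.
Qed.


Lemma In_catl (X : Type) (x : X) (s1 s2 : seq X) : List.In x s1 -> List.In x (s1 ++ s2).
Proof. elim: s1 => //= y s1 IH [->|h]; [by left | right; exact: IH]. Qed.

Lemma In_catr (X : Type) (x : X) (s1 s2 : seq X) : List.In x s2 -> List.In x (s1 ++ s2).
Proof. elim: s1 => //= y s1 IH h; right; exact: IH. Qed.

Lemma In_map (X Y : Type) (f : X -> Y) x (s : seq X) : List.In x s -> List.In (f x) (map f s).
Proof. elim: s => //= y s IH [->|h]; [by left | right; exact: IH]. Qed.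

Lemma In_allpairs (X Y Z : Type) (f : X -> Y -> Z) x y (l : seq X) (m : seq Y) :
  List.In x l -> List.In y m -> List.In (f x y) [seq f x y | x <- l, y <- m].
Proof.
move=> hx hy; elim: l hx => //= a l IH [->|/IH h]; first exact/In_catl/In_map.
exact: In_catr.
Qed.

Lemma allpairs1 (X Y Z : Type) (f : X -> Y -> Z) (l : seq X) (b : Y) :
  [seq f x y | x <- l, y <- [:: b]] = [seq f x b | x <- l].
Proof. by elim: l => //= a l ->. Qed.

Lemma CG (X Y : Sys) (l : seq (Tr X Y)) (a : Tr X Y) :
  Test (a :: l) -> Test [:: addT a (sumT l)].
Proof.
elim: l a => [|b l IH] a /=.
  by rewrite (addTC HT) (add0T HT).
by move=> /(test_cg HT) /IH; rewrite (addTA HT).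
Qed.

Lemma probsum (X : Sys) (l : seq (Tr X I)) (s : Tr I X) :
  prob (comp (sumT l) s) = \sum_(a <- l) prob (comp a s).
Proof.
elim: l => [|a l IH] /=; first by rewrite big_nil (comp0l HT) prob0.
by rewrite big_cons (compDl HT) (prob_add HT) IH.
Qed.

Lemma lsum_ge0 (X : Type) (F : X -> R) (l : seq X) :
  (forall a, List.In a l -> 0 <= F a) -> 0 <= \sum_(a <- l) F a.
Proof.
elim: l => [|a l IH] hp; first by rewrite big_nil.
rewrite big_cons; apply: addr_ge0; first by apply: hp; left.
by apply: IH => b hb; apply: hp; right.
Qed.

Lemma psum0 (X : Type) (F : X -> R) (l : seq X) c :
  (forall a, List.In a l -> 0 <= F a) -> \sum_(a <- l) F a = 0 -> List.In c l -> F c = 0.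
Proof.
elim: l => //= a l IH hp; rewrite big_cons => hs.
have ha := hp a (or_introl erefl).
have hl : 0 <= \sum_(b <- l) F b by apply: lsum_ge0 => b hb; apply: hp; right.
move=> [<-|hc]; first lra.
apply: IH => //; first by move=> b hb; apply: hp; right.
lra.
Qed.


Lemma zeroS (P : Sys) (x : Tr I P) (e : Tr P I) :
  Ev x -> Test [:: e] -> prob (comp e x) = 0 -> x = zeroT.
Proof.
move=> [lx [hlx inx]] he hp.
have ex0 : comp e x = zeroT by apply: (prob_inj HT); rewrite hp prob0.
apply: (tr_ext HT) => E Psi c [lP [hlP inP]] [lc [hlc inc]].
rewrite (par0l HT) (comp0l HT) (comp0r HT) prob0.
set s := comp (par x (idT E)) Psi.
have hs := test_seq HT hlP (test_par HT hlx (test_id HT E)).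
have ins := In_allpairs (fun f g => comp g f) inP
   (In_allpairs (fun f g => par f g) inx (or_introl erefl : List.In (idT E) [:: idT E])).
have hsc := test_seq HT hs hlc.
case: lc hlc inc hsc => [//|a l] hlc inc hsc.
have [eE [heE _]] := HSC.2 E.
have eq : addT a (sumT l) = comp (lu I) (par e eE) :=
  detU (CG hlc) (tseq (tpar he heE) (test_lu HT I)).
have hsum : \sum_(b <- a::l) prob (comp b s) = 0.
  rewrite -(probsum (a::l)) /= eq.
  rewrite -(compA HT) /s (compA HT Psi) -(par_comp HT) ex0 (par0l HT) (comp0l HT) (comp0r HT) prob0 //.
apply: (psum0 _ hsum inc) => b hb; apply: (prob_ge0 HT).
eexists; split; first exact: hsc.
exact: (In_allpairs (fun f g => comp g f) ins hb).
Qed.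

Lemma In_perm (X : Type) (x : X) (l : seq X) :
  List.In x l -> exists r, Permutation.Permutation l (x :: r).
Proof.
elim: l => //= y l IH [->|h]; first by exists l.
have [r hr] := IH h; exists (y :: r).
apply: Permutation.perm_trans; first exact: Permutation.perm_skip hr.
exact: Permutation.perm_swap.
Qed.

Lemma detS (P : Sys) (s : Tr I P) (e : Tr P I) :
  Ev s -> Test [:: e] -> comp e s = idT I -> Test [:: s].
Proof.
move=> [l0 [hl0 ins]] he hes.
have [r hr] := In_perm ins.
have hsr := test_perm HT hl0 hr.
have ht := test_seq HT hsr he; rewrite allpairs1 in ht.
have hsum := prob_test HT ht.
rewrite big_map big_cons hes prob1 in hsum.
have hr0 : \sum_(j <- r) prob (comp e j) = 0 by lra.
have z : forall x, List.In x r -> x = zeroT.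
  move=> x hx; apply: (zeroS _ he).
    by exists (s :: r); split => //; right.
  apply: (psum0 _ hr0 hx) => b hb; apply: (prob_ge0 HT).
  eexists; split; first exact: ht.
  by right; apply: In_map.
have sz : sumT r = zeroT.
  elim: r z {hr hsr ht hsum hr0} => //= a r IH z.
  by rewrite IH ?(z a (or_introl erefl)) ?(add0T HT) // => x hx; apply: z; right.
by have := CG hsr; rewrite sz (addTC HT) (add0T HT).
Qed.

Lemma inf_ge0 (S : set R) : (forall y, S y -> 0 <= y) -> nonempty S -> 0 <= inf S.
Proof. by move=> h hn; apply: lb_le_inf. Qed.

Lemma inf_le_inf (S S' : set R) : (forall y, S' y -> 0 <= y) -> nonempty S ->
  (forall x, S x -> exists2 y, S' y & y <= x) -> inf S' <= inf S.
Proof.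
move=> h0 hn hx; apply: lb_le_inf => // x /hx [y Sy lyx].
apply: le_trans lyx; apply: ge_inf => //; by exists 0.
Qed.

Lemma fidset_ge0 (P : Sys) (X Y : Tr I P) y :
  [set x : R | exists l : list (Tr P I), Test l /\
        x = \sum_(a <- l) Num.sqrt (pairing a X * pairing a Y)] y -> 0 <= y.
Proof. by move=> [l [_ ->]]; apply: sumr_ge0 => i _; apply: sqrtr_ge0. Qed.

Lemma fid_ge0 (P : Sys) (X Y : Tr I P) : 0 <= fidelity X Y.
Proof.
apply: inf_ge0; first exact: fidset_ge0.
have [e [he _]] := HSC.2 P; by exists (\sum_(a <- [:: e]) Num.sqrt (pairing a X * pairing a Y)), [:: e].
Qed.

Lemma fid_mono (P Q : Sys) (g : Tr P Q) (X Y : Tr I P) :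
  Test [:: g] -> fidelity X Y <= fidelity (comp g X) (comp g Y).
Proof.
move=> hg; apply: inf_le_inf; first exact: fidset_ge0.
  have [e [he _]] := HSC.2 Q.
  by exists (\sum_(a <- [:: e]) Num.sqrt (pairing a (comp g X) * pairing a (comp g Y))), [:: e].
move=> x [l [hl ->]]; exists (\sum_(a <- [seq comp a g | a <- l]) Num.sqrt (pairing a X * pairing a Y)).
  exists [seq comp a g | a <- l]; split => //.
  by have := test_seq HT hg hl; rewrite /= cats0.
by rewrite big_map /pairing; under eq_bigr => a _ do rewrite -!(compA HT).
Qed.

Lemma rev_comp (X Y Z : Sys) (f : Tr X Y) (g : Tr Y Z) :
  Reversible f -> Reversible g -> Reversible (comp g f).
Proof.
move=> [hf [f' [hf' [e1 e2]]]] [hg [g' [hg' [e3 e4]]]].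
split; first exact: tseq.
exists (comp f' g'); split; first exact: tseq.
split.
  by rewrite (compA HT) -(compA HT g) e3 (compT1 HT) e1.
by rewrite (compA HT) -(compA HT f') e2 (compT1 HT) e4.
Qed.

Lemma rev_par1 (X Y Z : Sys) (f : Tr X Y) : Reversible f -> Reversible (par (idT Z) f).
Proof.
move=> [hf [f' [hf' [e1 e2]]]]; split; first exact: tpar (test_id HT Z) hf.
exists (par (idT Z) f'); split; first exact: tpar (test_id HT Z) hf'.
by rewrite -!(par_comp HT) e1 e2 !(comp1T HT) !(par_id HT).
Qed.

Lemma rev_par2 (X Y Z : Sys) (f : Tr X Y) : Reversible f -> Reversible (par f (idT Z)).
Proof.
move=> [hf [f' [hf' [e1 e2]]]]; split; first exact: tpar hf (test_id HT Z).
exists (par f' (idT Z)); split; first exact: tpar hf' (test_id HT Z).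
by rewrite -!(par_comp HT) e1 e2 !(comp1T HT) !(par_id HT).
Qed.

Lemma rev_asc (X Y Z : Sys) : Reversible (asc X Y Z).
Proof.
split; first exact: (test_asc HT).
exists (ascI X Y Z); split; first exact: (test_ascI HT).
by rewrite (asc_inv1 HT) (asc_inv2 HT).
Qed.

Lemma rev_ascI (X Y Z : Sys) : Reversible (ascI X Y Z).
Proof.
split; first exact: (test_ascI HT).
exists (asc X Y Z); split; first exact: (test_asc HT).
by rewrite (asc_inv1 HT) (asc_inv2 HT).
Qed.

Lemma rev_sw (X Y : Sys) : Reversible (sw X Y).
Proof.
split; first exact: (test_sw HT).
exists (sw Y X); split; first exact: (test_sw HT).
by rewrite !(sw_inv HT).
Qed.

Lemma sumT_map (X Y Z : Sys) (N : Tr Y Z) (l : seq (Tr X Y)) :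
  sumT (map (comp N) l) = comp N (sumT l).
Proof. by elim: l => [|a l IH] /=; rewrite ?(comp0r HT) // IH (compDr HT). Qed.

Lemma Ev_comp (X Y Z : Sys) (M : Tr Y Z) (s : Tr X Y) : Test [:: M] -> Ev s -> Ev (comp M s).
Proof.
move=> hM [l [hl ins]]; exists [seq comp M f | f <- l]; split.
  by have := test_seq HT hl hM; rewrite allpairs1.
exact: (In_map (comp M)).
Qed.

Lemma pure_rev (P Q : Sys) (M : Tr P Q) (s : Tr I P) :
  Reversible M -> Pure s -> Pure (comp M s).
Proof.
move=> [hM [N [hN [e1 e2]]]] [hs hp]; split; first exact: Ev_comp.
move=> l m hl hsum sg insg.
have hl' : Test (map (comp N) l) by have := test_seq HT hl hN; rewrite allpairs1.
have hsum' : sumT (mask m (map (comp N) l)) = s.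
  by rewrite -map_mask sumT_map hsum (compA HT) e1 (comp1T HT).
have [lam hlam] := hp _ _ hl' hsum' (comp N sg) ltac:(by rewrite -map_mask; apply: In_map).
exists lam; by rewrite -(comp1T HT sg) -e2 -(compA HT) hlam (compZr HT).
Qed.

Lemma par1comp (X Y Z W : Sys) (g : Tr Z W) (f : Tr Y Z) :
  par (idT X) (comp g f) = comp (par (idT X) g) (par (idT X) f).
Proof. by rewrite -(par_comp HT) (comp1T HT). Qed.

Lemma parcomp1 (X Y Z W : Sys) (g : Tr Z W) (f : Tr Y Z) :
  par (comp g f) (idT X) = comp (par g (idT X)) (par f (idT X)).
Proof. by rewrite -(par_comp HT) (comp1T HT). Qed.

Lemma Ktri (X C D : Sys) (eC : Tr C I) (eD : Tr D I) :
  comp (ru X) (comp (par (idT X) (comp eD (comp (lu D) (par eC (idT D))))) (asc X C D))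
  = comp (comp (ru X) (par (idT X) eC)) (comp (ru (sP X C)) (par (idT (sP X C)) eD)).
Proof.
rewrite !par1comp -!(compA HT) -(asc_nat HT).
rewrite (compA HT (par (par (idT X) eC) (idT D)) (asc X I D) (par (idT X) (lu D))).
rewrite (triangle HT) -(parcomp1 _ (ru X) (par (idT X) eC)).
rewrite -parE2 parE1 (compA HT) (ru_nat HT).
by rewrite -!(compA HT).
Qed.

Lemma scal1 (s : Tr I I) : Test [:: s] -> s = idT I.
Proof.
move=> h; apply: (prob_inj HT); rewrite prob1.
by have := prob_test HT h; rewrite big_cons big_nil addr0.
Qed.

Lemma traceId (X Y : Sys) (rho : Tr I X) (Phi : Tr I (sP X Y)) (e : Tr (sP X Y) I) :
  NormState rho -> Dilation rho Phi -> Test [:: e] -> comp e Phi = idT I.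
Proof.
move=> hr [_ [eY [heY hd]]] he.
have [eX [heX _]] := HSC.2 X.
have -> : e = comp eX (comp (ru X) (par (idT X) eY)).
  apply: detU he _; apply: tseq heX; apply: tseq; last exact: (test_ru HT).
  exact: tpar (test_id HT X) heY.
rewrite -!(compA HT) hd; apply: scal1; exact: tseq hr heX.
Qed.

Lemma Ev_stPar (X Y : Sys) (f : Tr I X) (g : Tr I Y) : Ev f -> Ev g -> Ev (stPar f g).
Proof.
move=> [l1 [h1 i1]] [l2 [h2 i2]].
exists [seq comp g0 f0 | f0 <- [:: luI I], g0 <- [seq par f g | f <- l1, g <- l2]].
split; first exact: (test_seq HT (test_luI HT I) (test_par HT h1 h2)).
apply: (In_allpairs (fun f g => comp g f)); first by left.
exact: (In_allpairs (fun f g => par f g)).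
Qed.

Lemma dil_asc (X C D : Sys) (rho : Tr I X) (Psi : Tr I (sP X C)) (Psi' : Tr I (sP (sP X C) D)) :
  Dilation rho Psi -> Dilation Psi Psi' -> Dilation rho (comp (asc X C D) Psi').
Proof.
move=> [_ [eC [heC hC]]] [hs' [eD [heD hD]]].
split; first exact: Ev_comp (test_asc HT _ _ _) hs'.
exists (comp eD (comp (lu D) (par eC (idT D)))); split.
  by apply: tseq heD; apply: tseq; [exact: tpar heC (test_id HT D) | exact: (test_lu HT)].
have K := Ktri X eC eD.
rewrite !(compA HT) in K *; rewrite K -!(compA HT) hD.
exact: hC.
Qed.

Lemma dil_par (X Y Q : Sys) (rho : Tr I X) (P1 : Tr I (sP X Y)) (P2 : Tr I Q) (eQ : Tr Q I) :
  Dilation rho P1 -> Ev P2 -> Test [:: eQ] -> comp eQ P2 = idT I ->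
  Dilation rho (comp (asc X Y Q) (stPar P1 P2)).
Proof.
move=> [h1 [eY [heY hY]]] h2 heQ htr.
split; first exact: Ev_comp (test_asc HT _ _ _) (Ev_stPar h1 h2).
exists (comp eQ (comp (lu Q) (par eY (idT Q)))); split.
  by apply: tseq heQ; apply: tseq; [exact: tpar heY (test_id HT Q) | exact: (test_lu HT)].
have K := Ktri X eY eQ.
rewrite /stPar !(compA HT) in K *; rewrite K -!(compA HT).
rewrite (compA HT (luI I) (par P1 P2)) -(par_comp HT) (comp1T HT) htr.
rewrite (compA HT (luI I)) (ru_nat HT) -(compA HT) -luru (lu_inv1 HT) (compT1 HT).
exact: hY.
Qed.

Lemma dil_rev (X S S' : Sys) (rho : Tr I X) (Z : Tr I (sP X S)) (N : Tr S S') :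
  Dilation rho Z -> Reversible N -> Dilation rho (comp (par (idT X) N) Z).
Proof.
move=> [hZ [eS [heS hS]]] [hN _].
split; first exact: Ev_comp (tpar (test_id HT X) hN) hZ.
have [e [he _]] := HSC.2 S'.
exists e; split => //.
have E : eS = comp e N by apply: detU heS (tseq hN he).
by rewrite E in hS; rewrite (compA HT Z) -par1comp.
Qed.

Definition disc (X E F : Sys) (eF : Tr F I) : Tr (sP X (sP E F)) (sP X E) :=
  comp (ru (sP X E)) (comp (par (idT (sP X E)) eF) (ascI X E F)).

Lemma disc_test (X E F : Sys) (eF : Tr F I) : Test [:: eF] -> Test [:: disc X E eF].
Proof.
move=> h; apply: tseq; last exact: (test_ru HT).
apply: tseq; first exact: (test_ascI HT).
exact: tpar (test_id HT _) h.
Qed.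

Lemma disc_comm (X E F : Sys) (eF : Tr F I) (Ch : Tr X X) :
  comp (disc X E eF) (par Ch (idT (sP E F))) = comp (par Ch (idT E)) (disc X E eF).
Proof.
rewrite /disc -(par_id HT E F) -!(compA HT) ascI_nat.
rewrite (compA HT (ascI X E F)) -parE2 parE1 -(compA HT) (compA HT _ _ (ru _)) (ru_nat HT).
by rewrite -!(compA HT).
Qed.

Lemma disc_asc (X E F : Sys) (eF : Tr F I) (Z : Tr I (sP (sP X E) F)) :
  comp (disc X E eF) (comp (asc X E F) Z) = comp (ru _) (comp (par (idT _) eF) Z).
Proof.
by rewrite /disc -!(compA HT) (compA HT Z (asc X E F)) (asc_inv2 HT) (comp1T HT).
Qed.

Lemma step_i (X : Sys) (rho : Tr I X) (Ch : Tr X X) (C : Sys) (Psi : Tr I (sP X C)) :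
  AllPurifiable T -> Dilation rho Psi ->
  exists (D : Sys) (Phi : Tr I (sP X D)), Purification rho Phi /\
    fidelity Phi (applyA Ch Phi) <= fidelity Psi (applyA Ch Psi).
Proof.
move=> hAP hd.
have [D0 [Psi' [hd' hp']]] := hAP _ Psi hd.1.
exists (sP C D0), (comp (asc X C D0) Psi'); split.
  split; [exact: dil_asc hd hd' | exact: pure_rev (rev_asc _ _ _) hp'].
have [_ [eD [heD hD]]] := hd'.
have := fid_mono (comp (asc X C D0) Psi') (applyA Ch (comp (asc X C D0) Psi')) (disc_test X C heD).
rewrite disc_asc hD /applyA (compA HT _ _ (disc _ _ _)) disc_comm -(compA HT) disc_asc hD //.
Qed.

Definition Nmap (B X E : Sys) : Tr (sP B (sP X E)) (sP E (sP X B)) :=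
  comp (par (idT E) (sw B X)) (comp (asc E B X) (comp (par (sw B E) (idT X))
    (comp (ascI B E X) (par (idT B) (sw X E))))).

Lemma rev_N (B X E : Sys) : Reversible (Nmap B X E).
Proof.
rewrite /Nmap; apply: rev_comp; last exact: rev_par1 (rev_sw _ _).
apply: rev_comp; last exact: rev_asc.
apply: rev_comp; last exact: rev_par2 (rev_sw _ _).
apply: rev_comp; last exact: rev_ascI.
exact: rev_par1 (rev_sw _ _).
Qed.

Lemma discY (X E Q : Sys) (Psi : Tr I (sP X E)) (Phi : Tr I Q) (eQ : Tr Q I) :
  comp eQ Phi = idT I ->
  comp (ru _) (comp (par (idT _) eQ) (stPar Psi Phi)) = Psi.
Proof.
move=> h; rewrite /stPar (compA HT (luI I)) -(par_comp HT) (comp1T HT) h.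
by rewrite (compA HT (luI I)) (ru_nat HT) -(compA HT) -luru (lu_inv1 HT) (compT1 HT).
Qed.

Lemma chain (X B E : Sys) (rho : Tr I X) (Ch : Tr X X) (Phi : Tr I (sP X B)) (Psi : Tr I (sP X E)) :
  NormState rho -> EssUniqPurif T -> AtomicParStates T ->
  Purification rho Phi -> Purification rho Psi ->
  fidelity Phi (applyA Ch Phi) <= fidelity Psi (applyA Ch Psi).
Proof.
move=> hr hEU hAt [dPhi pPhi] [dPsi pPsi].
have [eXB [heXB _]] := HSC.2 (sP X B).
have [eXE [heXE _]] := HSC.2 (sP X E).
have tPhi := traceId hr dPhi heXB.
have tPsi := traceId hr dPsi heXE.
set Xs := comp (par (idT X) (Nmap B X E)) (comp (asc X B (sP X E)) (stPar Phi Psi)).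
set Ys := comp (asc X E (sP X B)) (stPar Psi Phi).
have pX : Purification rho Xs.
  split; first by apply: dil_rev (rev_N _ _ _); apply: dil_par dPhi dPsi.1 heXE tPsi.
  apply: pure_rev; first exact: rev_par1 (rev_N _ _ _).
  exact: pure_rev (rev_asc _ _ _) (hAt _ _ _ _ pPhi pPsi).
have pY : Purification rho Ys.
  split; first exact: dil_par dPsi dPhi.1 heXB tPhi.
  exact: pure_rev (rev_asc _ _ _) (hAt _ _ _ _ pPsi pPhi).
have [U [hU eY]] := hEU X rho (ex_intro _ _ (ex_intro _ _ pX)) _ Xs Ys pX pY.
set h := comp (par (idT X) (Nmap B X E)) (comp (asc X B (sP X E))
   (comp (par (idT (sP X B)) Psi) (ruI (sP X B)))).
have th : Test [:: h].
  apply: tseq; last exact: tpar (test_id HT X) (rev_N _ _ _).1.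
  apply: tseq; last exact: (test_asc HT).
  apply: tseq; first exact: (test_ruI HT).
  exact: tpar (test_id HT _) (detS dPsi.1 heXE tPsi).
have hPhi : comp h Phi = Xs.
  rewrite /h /Xs /stPar -!(compA HT) ruI_nat (compA HT (ruI I)) -parE2 -luruI //.
have hcomm : comp h (par Ch (idT B)) = comp (par Ch (idT _)) h.
  rewrite /h -!(compA HT) ruI_nat (compA HT (ruI (sP X B)) (par (par Ch (idT B)) (idT I))) -(parE2 (par Ch (idT B)) Psi).
  rewrite (parE1 (par Ch (idT B)) Psi) -!(compA HT).
  rewrite (compA HT _ (par (par Ch (idT B)) (idT (sP X E))) (asc _ _ _)) (asc_nat HT) (par_id HT).
  rewrite -(compA HT) (compA HT _ (par Ch (idT _)) (par (idT X) _)) -(parE2 Ch (Nmap B X E)).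
  by rewrite (parE1 Ch (Nmap B X E)) -!(compA HT).
have s1 : fidelity Phi (applyA Ch Phi) <= fidelity Xs (applyA Ch Xs).
  have := fid_mono (Phi) (applyA Ch Phi) th.
  by rewrite hPhi /applyA (compA HT Phi) hcomm -(compA HT) hPhi.
have s2 : fidelity Xs (applyA Ch Xs) <= fidelity Ys (applyA Ch Ys).
  have := fid_mono (Xs) (applyA Ch Xs) (tpar (test_id HT X) hU.1).
  rewrite -eY /applyA (compA HT Xs) -(parE2 Ch U) (parE1 Ch U) -(compA HT) -eY //.
have s3 : fidelity Ys (applyA Ch Ys) <= fidelity Psi (applyA Ch Psi).
  have := fid_mono (Ys) (applyA Ch Ys) (disc_test X E heXB).
  rewrite /Ys disc_asc discY // /applyA (compA HT _ _ (disc _ _ _)) disc_comm -(compA HT) disc_asc discY //.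
exact: le_trans s1 (le_trans s2 s3).
Qed.
End S.

Theorem mainTheorem12 (R : realType) (T : OPTops R) (HT : OPTlaws T)
  (HSC : StrongCausal T) (A : Sys T) (rho : Tr sI A) (Ch : Tr A A) :
  NormState rho -> IsChannel Ch ->
  (AllPurifiable T -> corrFid rho Ch = corrFidPur rho Ch) /\
  (AllPurifiable T -> EssUniqPurif T -> AtomicParStates T ->
     forall (B : Sys T) (Phi : Tr sI (sP A B)), Purification rho Phi ->
       corrFid rho Ch = (fidelity Phi (applyA Ch Phi)) ^+ 2).
Proof.
move=> hr hCh.
have hrs : IsState rho by exists [:: rho]; split => //; left.
have sq0 : forall x : R, 0 <= x ^+ 2 by move=> x; rewrite expr2; nra.
have sqle : forall a b : R, 0 <= a -> a <= b -> a ^+ 2 <= b ^+ 2.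
  by move=> a b ha hb; rewrite !expr2; nra.
split.
  move=> hAP; apply/eqP; rewrite eq_le; apply/andP; split.
    apply: inf_le_inf.
    - by move=> y [C [Psi [_ ->]]].
    - have [C [Phi hP]] := hAP _ rho hrs.
      by exists (fidelity Phi (applyA Ch Phi) ^+ 2), C, Phi.
    - move=> x [C [Phi [hP ->]]]; exists (fidelity Phi (applyA Ch Phi) ^+ 2) => //.
      by exists C, Phi; split => //; exact: hP.1.
  apply: inf_le_inf.
  - by move=> y [C [Psi [_ ->]]].
  - have [C [Phi hP]] := hAP _ rho hrs.
    by exists (fidelity Phi (applyA Ch Phi) ^+ 2), C, Phi; split => //; exact: hP.1.
  - move=> x [C [Psi [hD ->]]].
    have [D [Phi [hP hle]]] := step_i HT HSC Ch hAP hD.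
    exists (fidelity Phi (applyA Ch Phi) ^+ 2); first by exists D, Phi.
    by apply: sqle => //; apply: fid_ge0.
move=> hAP hEU hAt B Phi hPhi; apply/eqP; rewrite eq_le; apply/andP; split.
  apply: ge_inf; first by exists 0 => y [C [Psi [_ ->]]].
  by exists B, Phi; split => //; exact: hPhi.1.
apply: lb_le_inf.
  by exists (fidelity Phi (applyA Ch Phi) ^+ 2), B, Phi; split => //; exact: hPhi.1.
move=> x [C [Psi [hD ->]]].
have [D [Phi' [hP hle]]] := step_i HT HSC Ch hAP hD.
apply: sqle; first exact: fid_ge0.
exact: le_trans (chain HT HSC Ch hr hEU hAt hPhi hP) hle.
Qed.
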